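(* For every integer $m\ge0$ and every integer $l\ge 2m+3$, \[ \mu_l^{(m+1,m+2)}=2P_{l-2m-3}^{\{-2,m-1,m\}} . \]
   Context: An $n$-board is the strip $[0,n]\times[0,1]$ divided into unit cells, each split into a left and a right half (slot). A $(w,g;t)$-comb is a tile consisting of a row of $t$ rectangles (teeth) of size $w\times1$, consecutive teeth separated by a gap of width $g$; gaps are not part of the tile and may be occupied by other tiles. A tiling is a placement of translated (unrotated) combs whose teeth cover the board exactly without overlap. Given a tiling of an $n$-board, an integer $x$ with $0<x<n$ is a cut point if every comb has all of its teeth in $[0,x]$ or all in $[x,n]$. A metatile of length $l$ is a tiling of an $l$-board with no cut point. A metatile is mixed if it contains combs of more than one type. For integers $1\le m_1<m_2$, $\mu_l^{(m_1,m_2)}$ is the number of mixed metatiles of length $l$ when tiling with $(\frac12,\frac12;m_1)$- and $(\frac12,\frac12;m_2)$-combs. For a finite set $W$ of integers, $P_n^W$ is the number of permutations $\pi$ of $\{1,\dots,n\}$ with $\pi(i)-i\in W$ for all $i$ (equivalently, the permanent of the $n\times n$ $(0,1)$ matrix whose $(i,j)$ entry is $1$ iff $j-i\in W$), with $P_0^W=1$. *)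

(* Defs.v *)
From mathcomp Require Import all_boot all_order all_algebra all_fingroup.
Unset Printing Implicit Defensive.
Import GRing.Theory Num.Theory.

(* Slots of an n-board: the half-cell [k/2,(k+1)/2] is slot k, 0 <= k < 2n.
   A (1/2,1/2;t)-comb placed with its first tooth on slot s covers the slots
   s, s+2, ..., s+2(t-1).  A placed comb is a pair (s, b) : 'I_(2n) * bool,
   with b = false meaning a (1/2,1/2;m1)-comb and b = true a (1/2,1/2;m2)-comb. *)

Definition comb_len (m1 m2 : nat) (b : bool) : nat := if b then m2 else m1.

Definition covers (m1 m2 : nat) (s : nat) (b : bool) (j : nat) : bool :=
  has (fun k => s + 2 * k == j) (iota 0 (comb_len m1 m2 b)).

Definition last_slot (m1 m2 : nat) (s : nat) (b : bool) : nat :=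
  s + 2 * (comb_len m1 m2 b).-1.

Definition is_tiling (m1 m2 n : nat) (T : {set 'I_(2 * n) * bool}) : bool :=
  [forall p in T, last_slot m1 m2 p.1 p.2 < 2 * n] &&
  [forall j : 'I_(2 * n), #|[set p in T | covers m1 m2 p.1 p.2 j]| == 1].

Definition is_cut_point (m1 m2 n : nat) (T : {set 'I_(2 * n) * bool}) (x : nat)
  : bool :=
  [forall p in T, (last_slot m1 m2 p.1 p.2 < 2 * x) || (2 * x <= p.1)].

Definition is_metatile (m1 m2 l : nat) (T : {set 'I_(2 * l) * bool}) : bool :=
  is_tiling m1 m2 l T &&
  [forall x : 'I_l, (0 < (x : nat)) ==> ~~ is_cut_point m1 m2 l T x].

Definition is_mixed (l : nat) (T : {set 'I_(2 * l) * bool}) : bool :=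
  [exists p in T, p.2] && [exists p in T, ~~ p.2].

Definition mu (m1 m2 l : nat) : nat :=
  #|[set T : {set 'I_(2 * l) * bool} | is_metatile m1 m2 l T && is_mixed l T]|.

Definition Pcount (n : nat) (W : seq int) : nat :=
  #|[set s : 'S_n | [forall i : 'I_n, ((s i)%:Z - i%:Z)%R \in W]]|.

(* Main.v *)
Require Import Defs.
From mathcomp Require Import all_boot all_order all_algebra all_fingroup.
From mathcomp Require Import zify.
From Stdlib Require Import Lia.

Section Gen.
Variables (m n : nat) (f : bool).
Local Notation a := m.+1.
Local Notation l := (n + (2 * m + 3)).
Local Notation Tset := {set 'I_(2 * l) * bool}.

Definition ST (T : Tset) (L : bool) (c t : nat) : Prop :=
  exists2 p, p \in T & (p.1 : nat) = 2 * c + (L (+) f) /\ t = a + p.2.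

Lemma tlE b : comb_len m.+1 m.+2 b = a + b.
Proof. by case: b; rewrite /= ?addn0 ?addn1. Qed.

Lemma half2 c (P : bool) : (2 * c + P)./2 = c.
Proof. by rewrite mul2n addnC half_bit_double. Qed.

Lemma odd2 c (P : bool) : odd (2 * c + P) = P.
Proof. by rewrite oddD mul2n odd_double; case: P. Qed.

Lemma slotE s : s = 2 * s./2 + odd s.
Proof. by rewrite mul2n addnC odd_double_half. Qed.

Lemma coversE c (P : bool) b d (Q : bool) :
  covers m.+1 m.+2 (2 * c + P) b (2 * d + Q) = (P == Q) && (c <= d < c + (a + b)).
Proof.
rewrite /covers tlE; apply/hasP/idP.
- case=> k; rewrite mem_iota add0n => hk /eqP e.
  case: P Q e => [] [] /= e; rewrite ?eqxx /=; try (exfalso; lia); lia.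
- case/andP => /eqP <- /andP [h1 h2]; exists (d - c).
    by rewrite mem_iota; lia.
  by apply/eqP; lia.
Qed.

Lemma lastE c (P : bool) b :
  last_slot m.+1 m.+2 (2 * c + P) b = 2 * (c + (a + b) - 1) + P.
Proof. rewrite /last_slot tlE; case: b; case: P => /=; lia. Qed.

Lemma memT_ST (T : Tset) p : p \in T -> ST T (odd p.1 (+) f) (p.1./2) (a + p.2).
Proof. by move=> pT; exists p => //; split => //; rewrite addbK -slotE. Qed.
Arguments memT_ST {T p}.

Definition TP (T : Tset) :=
  [/\ forall L c t, ST T L c t -> c + t <= l,
      forall L d, d < l -> exists c t, [/\ ST T L c t, c <= d & d < c + t] &
      forall L c t c' t' d, ST T L c t -> ST T L c' t' ->
         c <= d < c + t -> c' <= d < c' + t' -> c = c' /\ t = t'].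

Lemma bool_le1 (b : bool) : (b : nat) <= 1.
Proof. by case: b. Qed.

Lemma tilingP (T : Tset) : is_tiling m.+1 m.+2 l T <-> TP T.
Proof.
split.
- case/andP => /forallP Hb /forallP Hc.
  have Hbd : forall L c t, ST T L c t -> c + t <= l.
    move=> L c t [p pT [e1 e2]]; move: (Hb p); rewrite pT /= e1 lastE -e2.
    have := bool_le1 (L (+) f); lia.
  have Hj : forall L d, d < l -> 2 * d + (L (+) f) < 2 * l.
    by move=> L d hd; have := bool_le1 (L (+) f); lia.
  split => //.
  + move=> L d hd; pose j := Ordinal (Hj L d hd).
    have /cards1P [p0 Hp0] := Hc j.
    have : p0 \in [set p in T | covers m.+1 m.+2 p.1 p.2 j] by rewrite Hp0 set11.
    rewrite inE => /andP [p0T]; rewrite [in X in X -> _](slotE p0.1) /= coversE.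
    case/andP => /eqP e /andP [h1 h2].
    exists (p0.1./2), (a + p0.2); split => //.
    by exists p0 => //; split => //; rewrite {1}(slotE p0.1) e.
  + move=> L c t c' t' d H1 H2 h h'.
    have hd : d < l by have := Hbd _ _ _ H1; lia.
    case: H1 => p pT [e1 e2]; case: H2 => p' p'T [e1' e2'].
    pose j := Ordinal (Hj L d hd).
    have /cards1P [p0 Hp0] := Hc j.
    have : p \in [set p in T | covers m.+1 m.+2 p.1 p.2 j].
      by rewrite inE pT e1 /= coversE eqxx /= -e2.
    have : p' \in [set p in T | covers m.+1 m.+2 p.1 p.2 j].
      by rewrite inE p'T e1' /= coversE eqxx /= -e2'.
    rewrite Hp0 !inE => /eqP E1 /eqP E2.
    have E : p = p' by rewrite E1 E2.
    split; first by move: e1 e1'; rewrite E => -> /eqP; lia.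
    by rewrite e2 e2' E.
- case=> Hb He Hu; apply/andP; split.
  + apply/forallP => p; apply/implyP => pT.
    have := Hb _ _ _ (memT_ST pT).
    rewrite [X in last_slot _ _ X](slotE p.1) lastE.
    have := bool_le1 (odd p.1); lia.
  + apply/forallP => j; apply/cards1P.
    have hd : j./2 < l.
      have := ltn_ord j; have := slotE j; have := bool_le1 (odd j); lia.
    have [c [t [[p0 p0T [e1 e2]] h1 h2]]] := He (odd j (+) f) _ hd.
    exists p0; apply/setP => p; rewrite !inE; apply/andP/eqP.
    * case=> pT; rewrite [X in covers _ _ X](slotE p.1) [X in covers _ _ _ _ X](slotE j).
      rewrite coversE => /andP [/eqP eo /andP [k1 k2]].
      have := memT_ST pT; rewrite eo => H.
      have [] := Hu _ _ _ _ _ _ H (ex_intro2 _ _ p0 p0T (conj e1 e2)) (introT andP (conj k1 k2))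
                   (introT andP (conj h1 h2)).
      move=> E1 E2; case: p pT eo E1 E2 {H k1 k2} => [p1 p2] /= _ eo E1 E2.
      case: p0 e1 e2 {p0T} => [q1 q2] /= e1 e2.
      have -> : p2 = q2 by move: E2; rewrite e2 => /addnI; case: p2; case: (q2) => //.
      congr pair; apply: val_inj => /=; rewrite e1 (slotE p1) E1 eo addbK //.
    * move=> ->; split => //.
      rewrite e1 [X in covers _ _ _ _ X](slotE j) coversE addbK eqxx /= -e2.
      by rewrite h1 h2.
Qed.

Lemma cutP (T : Tset) x : TP T -> 0 < x < l ->
  is_cut_point m.+1 m.+2 l T x <-> (forall L, exists t, ST T L x t).
Proof.
case=> Hb He Hu hx; split.
- move=> /forallP Hc L.
  have [c [t [[p pT [e1 e2]] h1 h2]]] := He L x (proj2 (andP hx)).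
  have [E|ne] := eqVneq c x; first by subst c; exists t; exists p.
  move: (Hc p); rewrite pT /= e1 lastE -e2.
  have := bool_le1 (L (+) f); move/eqP: ne; lia.
- move=> H; apply/forallP => p; apply/implyP => pT.
  have [t0 H0] := H (odd p.1 (+) f).
  have H1 := memT_ST pT.
  rewrite [X in last_slot _ _ X](slotE p.1) lastE {2}(slotE p.1).
  have := bool_le1 (odd p.1); have := bool_le1 p.2.
  have [h|h] := leqP (p.1./2 + (a + p.2)) x; first by move=> *; apply/orP; left; lia.
  have [h'|h'] := leqP x (p.1./2); first by move=> *; apply/orP; right; lia.
  have t0pos : 0 < t0 by case: H0 => q _ [_ ->]; lia.
  have hh1 : x <= x < x + t0 by lia.
  have hh2 : p.1./2 <= x < p.1./2 + (a + p.2) by lia.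
  have [E _] := Hu _ _ _ _ _ x H0 H1 hh1 hh2.
  lia.
Qed.

End Gen.

Set Implicit Arguments.
Unset Strict Implicit.

Definition valid (m n : nat) (s : 'S_n) :=
  [forall i : 'I_n, ((s i).+2 == i) || ((s i).+2 == i + m.+1) || ((s i).+2 == i + m.+2)].

Section Perm.
Variables (m n : nat) (s : 'S_n).
Hypothesis Hs : valid m s.
Local Notation a := m.+1.
Local Notation l := (n + (2 * m + 3)).

Definition sv (x : nat) : nat := if (insub x : option 'I_n) is Some i then (s i : nat) else 0.

Lemma svE (i : 'I_n) : sv i = s i.
Proof. by rewrite /sv valK. Qed.

Lemma svP x (h : x < n) : sv x = s (Ordinal h).
Proof. by rewrite -svE. Qed.

Lemma sv_lt x : x < n -> sv x < n.
Proof. by move=> h; rewrite (svP h). Qed.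

Lemma sv_disp x : x < n ->
  ((sv x).+2 == x) || ((sv x).+2 == x + a) || ((sv x).+2 == x + a.+1).
Proof. by move=> h; rewrite (svP h); move/forallP: Hs => /(_ (Ordinal h)). Qed.

Lemma sv_inj x y : x < n -> y < n -> sv x = sv y -> x = y.
Proof.
move=> hx hy; rewrite (svP hx) (svP hy) => /val_inj /perm_inj.
by move/(congr1 val).
Qed.

Lemma sv_surj v : v < n -> exists2 x, x < n & sv x = v.
Proof.
move=> hv; exists ((s^-1)%g (Ordinal hv)) => //.
by rewrite svE permKV.
Qed.

Definition Z x := (x < n) && ((sv x).+2 != x).
Definition Z' x := [|| Z x, x == n | x == n.+1].
Definition nxt x := if Z x then (sv x).+2 else x + a.+1.
Definition len x := if x < n then (sv x).+2 - x else if x == n then a.+1 else a.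
Definition E x := Z' x || (n + a.+1 <= x).

Lemma Z_disp x : Z x -> ((sv x).+2 = x + a) \/ ((sv x).+2 = x + a.+1).
Proof.
case/andP => h /eqP ne; move: (sv_disp h) => /orP [/orP [] | ] /eqP e; lia.
Qed.

Lemma Z_len x : Z x -> nxt x = x + len x /\ (len x = a \/ len x = a.+1).
Proof.
move=> hz; have := Z_disp hz; move: hz; rewrite /nxt /len => hz; rewrite hz.
case/andP: hz => -> _; lia.
Qed.

Lemma notZ x : x < n -> ~~ Z x -> (sv x).+2 = x.
Proof. by rewrite /Z => -> /= /negbNE /eqP. Qed.

Lemma nxt_gt x : x < nxt x.
Proof.
rewrite /nxt; case: ifP => hz; last lia.
have := Z_disp hz; lia.
Qed.

Lemma nxt_ge2 x : 2 <= nxt x.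
Proof. rewrite /nxt; case: ifP => _; lia. Qed.

Lemma Z_small x : x < 2 -> x < n -> Z x.
Proof. by move=> h1 h2; rewrite /Z h2 /=; apply/eqP; lia. Qed.

Lemma E_r (r : nat) : r < 2 -> E r.
Proof.
move=> hr; rewrite /E /Z'; case: (ltnP r n) => h.
  by rewrite Z_small.
apply/orP; left; apply/orP; right; apply/orP; lia.
Qed.

Lemma Z_nxt x : Z x -> Z' (nxt x).
Proof.
move=> hz; rewrite /nxt hz /Z'.
have hx : x < n by case/andP: hz.
have := sv_lt hx => hv.
case: (ltnP (sv x).+2 n) => h.
- apply/orP; left; rewrite /Z h /=; apply/eqP => e.
  have := sv_inj h hx; rewrite (_ : sv (sv x).+2 = sv x); last by lia.
  move=> /(_ erefl) e2; move: hz; rewrite /Z -e2 e => /andP [_]; rewrite eqxx.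
  by [].
- apply/orP; right; apply/orP; lia.
Qed.

Lemma E_nxt x : E x -> E (nxt x).
Proof.
move=> hE; case hz: (Z x); first by rewrite /E Z_nxt.
rewrite /nxt hz /E; apply/orP; right.
move: hE; rewrite /E /Z' hz /=; case/orP; first case/orP; move/eqP => // *; lia.
Qed.

Lemma E_notZ x : E x -> ~~ Z x -> n <= x.
Proof. by rewrite /E /Z' => /orP [/orP [-> //| /orP [] /eqP ->] | ] // *; lia. Qed.

Lemma nxt_inj x y : E x -> E y -> nxt x = nxt y -> x = y.
Proof.
move=> ex ey; rewrite /nxt.
case hx: (Z x); case hy: (Z y).
- move=> e; have [hx' _] := andP hx; have [hy' _] := andP hy.
  by apply: sv_inj => //; lia.
- have := E_notZ ey (negbT hy); have [hx' _] := andP hx; have := sv_lt hx'; lia.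
- have := E_notZ ex (negbT hx); have [hy' _] := andP hy; have := sv_lt hy'; lia.
- lia.
Qed.

Definition ch (r x : nat) := [exists k : 'I_x.+1, iter k nxt r == x].

Lemma iter_ge k z : z + k <= iter k nxt z.
Proof. elim: k => [|k IH] /=; first lia. have := nxt_gt (iter k nxt z); lia. Qed.

Lemma chP r x : reflect (exists k, iter k nxt r = x) (ch r x).
Proof.
apply: (iffP existsP).
- by case=> k /eqP e; exists k.
- case=> k e; have hk : k < x.+1 by have := iter_ge k r; lia.
  by exists (Ordinal hk); rewrite /= e.
Qed.

Lemma iter_E k (r : nat) : r < 2 -> E (iter k nxt r).
Proof. by move=> hr; elim: k => [|k IH] /=; [apply: E_r | apply: E_nxt]. Qed.

Lemma ch_E (r : nat) x : r < 2 -> ch r x -> E x.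
Proof. by move=> hr /chP [k <-]; apply: iter_E. Qed.

Lemma ch_nxt r x : ch r x -> ch r (nxt x).
Proof. by case/chP => k e; apply/chP; exists k.+1; rewrite /= e. Qed.

Lemma ch_refl r : ch r r.
Proof. by apply/chP; exists 0. Qed.

Lemma iter_disj p q : iter p nxt 0 = iter q nxt 1 -> False.
Proof.
elim: p q => [|p IH] [|q] //=.
- by have := nxt_ge2 (iter q nxt 1); lia.
- by have := nxt_ge2 (iter p nxt 0); lia.
- move=> e; apply: (IH q); apply: nxt_inj e; exact: iter_E.
Qed.

Lemma ch_disj x : ch 0 x -> ch 1 x -> False.
Proof. by case/chP => p <- /chP [q] /esym; apply: iter_disj. Qed.

Lemma Z'_pred x : Z' x -> 2 <= x -> exists2 y, Z y & nxt y = x.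
Proof.
move=> hz h2.
have hx : x - 2 < n by move: hz; rewrite /Z' /Z; case/orP; [case/andP; lia | case/orP => /eqP; lia].
have [y hy e] := sv_surj hx.
have zy : Z y.
  rewrite /Z hy /=; apply/eqP => e2.
  have exy : x = y by lia.
  subst y; move: hz; rewrite /Z' /Z hy /= e.
  case/or3P => /eqP; lia.
by exists y => //; rewrite /nxt zy e; lia.
Qed.

Lemma ch_Z' x : Z' x -> ch 0 x \/ ch 1 x.
Proof.
elim/ltn_ind: x => x IH hz.
case: (ltnP x 2) => h.
- by case: x {IH hz} h => [|[|]] // _; [left|right]; apply: ch_refl.
- have [y zy e] := Z'_pred hz h.
  have hy : y < x by rewrite -e; apply: nxt_gt.
  have zy' : Z' y by rewrite /Z' zy.
  by rewrite -e; case: (IH y hy zy') => H; [left|right]; apply: ch_nxt.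
Qed.

Lemma iter_ge' k z : z <= iter k nxt z.
Proof. by have := iter_ge k z; lia. Qed.

Lemma ch_order r x y : ch r x -> ch r y -> x < y -> nxt x <= y.
Proof.
case/chP => p <- /chP [q <-] h.
case: (ltnP p q) => hpq.
- rewrite (_ : q = (q - p.+1) + p.+1); last lia.
  rewrite iterD /=; exact: iter_ge'.
- move: h; rewrite (_ : p = (p - q) + q); last lia.
  rewrite iterD; have := iter_ge' (p - q) (iter q nxt r); lia.
Qed.

Lemma Z'_cases x : Z' x -> Z x \/ x = n \/ x = n.+1.
Proof. by rewrite /Z'; case/orP => [->|/orP [] /eqP ->]; auto. Qed.

Lemma nxt_len x : Z' x -> x + len x <= nxt x.
Proof.
case/Z'_cases => [hz | [->| ->]]; first by have [-> _] := Z_len hz.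
- rewrite /nxt /len /Z ltnn /= eqxx; lia.
- rewrite /nxt /len /Z ltnNge leqnSn /=; have -> : (n.+1 == n) = false by lia. lia.
Qed.

Lemma len_Z' x : Z' x -> len x = a \/ len x = a.+1.
Proof.
case/Z'_cases => [hz | [->| ->]]; first by have [_ H] := Z_len hz.
- by rewrite /len ltnn eqxx; right.
- rewrite /len ltnNge leqnSn /=; have -> : (n.+1 == n) = false by lia. by left.
Qed.

Lemma bound_Z' x : Z' x -> a + x + len x <= l /\ (n <= x -> a + x + len x = l).
Proof.
case/Z'_cases => [hz | [->| ->]].
- have [hx _] := andP hz; have [e _] := Z_len hz.
  have := sv_lt hx; rewrite /nxt hz in e; lia.
- rewrite /len ltnn eqxx; lia.
- rewrite /len ltnNge leqnSn /=; have -> : (n.+1 == n) = false by lia. lia.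
Qed.

Lemma E_Z' x : E x -> a + x < l -> Z' x.
Proof. by rewrite /E => /orP [//|]; lia. Qed.

End Perm.

Set Implicit Arguments.
Unset Strict Implicit.

Definition Meta (m n : nat) (f : bool) :=
  [set T : {set 'I_(2 * (n + (2 * m + 3))) * bool} |
    [&& is_metatile m.+1 m.+2 (n + (2 * m + 3)) T, is_mixed (n + (2 * m + 3)) T &
        [exists p in T, ((p.1 : nat) == f) && ~~ p.2]]].

Section G.
Variables (m n : nat) (f : bool) (s : 'S_n).
Hypothesis Hs : valid m s.
Local Notation a := m.+1.
Local Notation l := (n + (2 * m + 3)).
Local Notation Z := (Z s).
Local Notation Z' := (Z' s).
Local Notation nxt := (nxt m s).
Local Notation len := (len m s).
Local Notation ch := (ch m s).
Local Notation E := (E m s).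

Definition CT (L : bool) c t :=
  ((c == 0) && (t == a + L)) ||
  [&& a <= c, Z' (c - a), ch 1 (c - a) == L & t == len (c - a)].

Lemma chL (L : bool) x : Z' x -> (ch 1 x == L) = ch L x.
Proof.
move=> hz; case: L => /=; first by rewrite eqb_id.
rewrite eqbF_neg; apply/idP/idP.
- by move=> h; case: (ch_Z' Hs hz) => // h'; rewrite h' in h.
- by move=> h0; apply/negP => h1; apply: (ch_disj Hs h0 h1).
Qed.

Lemma CT_props L c t : CT L c t ->
  [/\ t = a \/ t = a.+1, c + t <= l &
      (0 < c -> [/\ a <= c, Z' (c - a), ch L (c - a) & t = len (c - a)])].
Proof.
case/orP => [/andP [/eqP -> /eqP ->] | /and4P [h1 h2 h3 /eqP ->]].
- split; [by case: L; [right|left]; lia | by case: L => /=; lia | by []].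
- have := bound_Z' Hs h2; have := len_Z' Hs h2.
  move=> H1 [H2 _]; split => //; first lia.
  by move=> _; split => //; rewrite -chL.
Qed.

Lemma CT_exists L d : d < l -> exists c t, [/\ CT L c t, c <= d & d < c + t].
Proof.
move=> hd.
case: (ltnP d (a + L)) => h0.
  by exists 0, (a + L); split => //; rewrite /CT eqxx eqxx.
have main : forall k x, l - x <= k -> ch L x -> a + x <= d ->
    exists c t, [/\ CT L c t, c <= d & d < c + t].
  elim=> [|k IH] x hk hc hx; first lia.
  have hE : E x by apply: (ch_E Hs _ hc); have := bool_le1 L; lia.
  have hz : Z' x by apply: (E_Z' Hs hE); lia.
  case: (ltnP d (a + x + len x)) => h1.
    exists (a + x), (len x); split; try lia.
    apply/orP; right; rewrite leq_addr (_ : a + x - a = x); last lia.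
    by rewrite hz eqxx chL // hc.
  have zx : Z x.
    case: (Z'_cases hz) => // [[] e]; have [_ ] := bound_Z' Hs hz; lia.
  have [e _] := Z_len Hs zx.
  have := len_Z' Hs hz => hl.
  apply: (IH (nxt x)); [lia | exact: (ch_nxt Hs) | lia].
apply: (main l L) => //; [lia | exact: (ch_refl Hs)].
Qed.

Lemma CT_unique L c t c' t' d : CT L c t -> CT L c' t' ->
  c <= d < c + t -> c' <= d < c' + t' -> c = c' /\ t = t'.
Proof.
wlog: c t c' t' / c <= c'.
  move=> W H1 H2 h1 h2; case: (leqP c c') => hc; first exact: W.
  by have [] := W c' t' c t (ltnW hc) H2 H1 h2 h1.
move=> hcc H1 H2 h1 h2.
have [P1 B1 C1] := CT_props H1; have [P2 B2 C2] := CT_props H2.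
case: (ltnP c c') => hlt; last first.
  have e : c = c' by lia.
  subst c'; split => //.
  move: H1 H2; rewrite /CT.
  case: (posnP c) => [->|hc] /=.
    by rewrite !orbF => /eqP -> /eqP ->.
  by rewrite /= => /and4P [_ _ _ /eqP ->] /and4P [_ _ _ /eqP ->].
exfalso.
have [a2 z2 ch2 e2] := C2 (leq_ltn_trans (leq0n c) hlt).
case: (posnP c) => hc.
- subst c.
  move: H1; rewrite /CT eqxx /= orbF => /eqP et.
  case: L et ch2 {C2 C1 P1 H2} => et ch2.
  + have e0 : c' - a = 0 by lia.
    rewrite e0 in ch2; exact: (ch_disj Hs (ch_refl Hs 0) ch2).
  + lia.
- have [a1 z1 ch1 e1] := C1 hc.
  have := ch_order Hs ch1 ch2 (_ : c - a < c' - a).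
  have := nxt_len Hs z1; lia.
Qed.

Lemma CT_start L L' c t t' : 0 < c -> CT L c t -> CT L' c t' -> L = L'.
Proof.
move=> hc H1 H2; have [_ _ C1] := CT_props H1; have [_ _ C2] := CT_props H2.
have [_ z1 c1 _] := C1 hc; have [_ _ c2 _] := C2 hc.
move: c1 c2; rewrite -!chL // => /eqP <- /eqP.
done.
Qed.

Definition gT := [set p : 'I_(2 * l) * bool | CT (odd p.1 (+) f) (p.1./2) (a + p.2)].

Lemma ST_gT L c t : ST m n f gT L c t <-> CT L c t.
Proof.
split.
- by case=> p; rewrite inE => H [e1 ->]; move: H; rewrite e1 half2 odd2 addbK.
- move=> H; have [P B _] := CT_props H.
  have hc : 2 * c + (L (+) f) < 2 * l.
    have := bool_le1 (L (+) f); lia.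
  have Eb : a + (t == a.+1) = t.
    by case: P => ->; rewrite ?eqxx ?addn1 // (ltn_eqF (ltnSn _)) addn0.
  exists (Ordinal hc, t == a.+1); first by rewrite inE /= half2 odd2 addbK Eb.
  by split => //=; rewrite Eb.
Qed.

Lemma gT_TP : TP m n f gT.
Proof.
split.
- by move=> L c t /ST_gT /CT_props [].
- move=> L d hd; have [c [t [H h1 h2]]] := CT_exists L hd.
  by exists c, t; split => //; apply/ST_gT.
- move=> L c t c' t' d H1 H2; apply: CT_unique; [exact: (proj1 (ST_gT _ _ _) H1) | exact: (proj1 (ST_gT _ _ _) H2)].
Qed.

Lemma gT_meta : gT \in Meta m n f.
Proof.
rewrite inE; apply/and3P; split.
- apply/andP; split; first by apply/(tilingP m n f); apply: gT_TP.
  apply/forallP => x; apply/implyP => hx; apply/negP.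
  have hx' : 0 < x < l by rewrite hx ltn_ord.
  move/(cutP m n f gT x gT_TP hx') => H.
  have [t0 /ST_gT H0] := H false; have [t1 /ST_gT H1] := H true.
  by have := CT_start hx H0 H1.
- have /ST_gT [p1 pT1 [e1 e2]] : CT true 0 (a + true) by rewrite /CT eqxx eqxx.
  have /ST_gT [p0 pT0 [e0 e0']] : CT false 0 (a + false) by rewrite /CT eqxx eqxx.
  apply/andP; split; apply/existsP.
  + by exists p1; rewrite pT1 /=; move: e2 => /addnI; case: (p1.2).
  + by exists p0; rewrite pT0 /=; move: e0' => /addnI; case: (p0.2).
- have /ST_gT [p0 pT0 [e0 e0']] : CT false 0 (a + false) by rewrite /CT eqxx eqxx.
  apply/existsP; exists p0; rewrite pT0 e0 /=.
  by rewrite muln0 add0n eqxx; move: e0' => /addnI; case: (p0.2).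
Qed.

End G.

Set Implicit Arguments.
Unset Strict Implicit.

Section H.
Variables (m n : nat) (f : bool).
Local Notation a := m.+1.
Local Notation l := (n + (2 * m + 3)).
Local Notation Tset := {set 'I_(2 * l) * bool}.
Local Notation ST := (ST m n f).
Local Notation memT := (memT_ST m n f _ _).

Definition NC (T : Tset) := forall c, 0 < c < l -> ~ (forall L, exists t, ST T L c t).

Lemma meta_TP_NC (T : Tset) : is_metatile m.+1 m.+2 l T -> TP m n f T /\ NC T.
Proof.
case/andP => /(tilingP m n f) HT /forallP Hc; split => // c hc H.
move: (Hc (Ordinal (proj2 (andP hc)))) => /=; rewrite (proj1 (andP hc)) /=.
by move/negP; apply; apply/(cutP m n f T c HT hc).
Qed.

Lemma ST_t (T : Tset) L c t : ST T L c t -> (t = a \/ t = a.+1).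
Proof. by case=> p _ [_ ->]; case: (p.2); [right|left]; lia. Qed.

Lemma TP_eq (T1 T2 : Tset) : TP m n f T1 -> TP m n f T2 -> T1 \subset T2 -> T1 = T2.
Proof.
case=> _ He1 _ [_ _ Hu2] sub; apply/eqP; rewrite eqEsubset sub /=.
apply/subsetP => p pT2.
have H2 := memT pT2.
have hd : p.1./2 < l.
  have := ltn_ord p.1; have := slotE p.1; have := bool_le1 (odd p.1); lia.
have [c [t [[q qT [e1 e2]] h1 h2]]] := He1 (odd p.1 (+) f) (p.1./2) hd.
have Hq2 : ST T2 (odd p.1 (+) f) c t by exists q => //; apply: (subsetP sub).
have hh : p.1./2 <= p.1./2 < p.1./2 + (a + p.2) by lia.
have [E1 E2] := Hu2 _ _ _ _ _ _ Hq2 H2 (introT andP (conj h1 h2)) hh.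
suff -> : p = q by [].
case: p q e1 e2 E1 E2 {pT2 H2 Hq2 qT hh h1 h2 hd} => [p1 p2] [q1 q2] /= e1 e2 E1 E2.
have -> : p2 = q2 by move: E2; rewrite e2 => /addnI; case: p2; case: (q2).
congr pair; apply: val_inj => /=; rewrite e1 (slotE p1) E1 addbK ?odd2 //.
Qed.


Definition wT (T : Tset) (i : nat) : nat :=
  if [pick p in T | p.1./2 == a + i] is Some p then i + (a + p.2) else i.

Definition hT (T : Tset) : 'S_n :=
  odflt 1%g [pick s : 'S_n | [forall i, (s i : nat) == (wT T i - 2)]].

Lemma Meta_hyps (T : Tset) : T \in Meta m n f -> [/\ TP m n f T, NC T & ST T false 0 a].
Proof.
rewrite inE => /and3P [HM _ /existsP [p /andP [pT /andP [/eqP e1 e2]]]].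
have [H1 H2] := meta_TP_NC HM; split => //.
exists p => //; split; first by rewrite e1.
by move: e2; case: (p.2) => //= _; rewrite addn0.
Qed.

Section HT.
Set Default Proof Using "All".
Variable T : Tset.
Hypotheses (HT : TP m n f T) (HN : NC T) (H0 : ST T false 0 a).

Lemma t_pos L c t : ST T L c t -> 0 < t.
Proof. by move/ST_t; lia. Qed.

Lemma bnd L c t : ST T L c t -> c + t <= l.
Proof. by case: HT => Hb _ _; apply: Hb. Qed.

Lemma uniqc L c t c' t' d : ST T L c t -> ST T L c' t' ->
  c <= d < c + t -> c' <= d < c' + t' -> c = c' /\ t = t'.
Proof. by case: HT => _ _ Hu; apply: Hu. Qed.

Lemma succ L c t : ST T L c t -> c + t < l -> exists t', ST T L (c + t) t'.
Proof.
case: HT => Hb He Hu H h.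
have [c' [t' [H' h1 h2]]] := He L (c + t) h.
case: (ltnP c' (c + t)) => hc.
- exfalso; have := t_pos H; have := t_pos H' => p1 p2.
  have hh1 : c <= c + t - 1 < c + t by lia.
  have hh2 : c' <= c + t - 1 < c' + t' by lia.
  have [E1 E2] := Hu _ _ _ _ _ _ H H' hh1 hh2; lia.
- have e : c' = c + t by lia.
  by subst c'; exists t'.
Qed.

Lemma pred L c t : ST T L c t -> 0 < c -> exists c' t', ST T L c' t' /\ c' + t' = c.
Proof.
case: HT => Hb He Hu H h.
have hl := Hb _ _ _ H; have tp := t_pos H.
have hS1 : c - 1 < l by lia.

have [c' [t' [H' h1 h2]]] := He L (c - 1) hS1.
case: (ltnP c (c' + t')) => hc.
- exfalso.
  have hh1 : c <= c < c + t by lia.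
  have hh2 : c' <= c < c' + t' by lia.
  have [E1 E2] := Hu _ _ _ _ _ _ H H' hh1 hh2; lia.
- by exists c', t'; split => //; lia.
Qed.

Lemma uniq0 L c t t' : ST T L c t -> ST T L c t' -> t = t'.
Proof.
move=> H H'; have := t_pos H; have := t_pos H' => p1 p2.
have hh1 : c <= c < c + t by lia.
have hh2 : c <= c < c + t' by lia.
by have [] := uniqc H H' hh1 hh2.
Qed.

Lemma NC' L c t t' : ST T L c t -> ST T (~~ L) c t' -> 0 < c -> False.
Proof.
move=> H H' hc; apply: (HN (c := c)).
  by have := bnd H; have := t_pos H; lia.
by move=> L0; case: (eqVneq L0 L) => [->|ne]; [exists t | exists t'; have -> : L0 = ~~ L by move: ne; case: (L0); case: (L)].
Qed.

Lemma initL L : ST T L 0 (a + L).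
Proof.
case: L; last by rewrite addn0.
case: HT => Hb He Hu.
have hS2 : 0 < l by lia.

have [c [t [H h1 h2]]] := He true 0 hS2.
have e : c = 0 by lia.
subst c; case: (ST_t H) => et; last by rewrite addn1 -et.
exfalso; subst t.
have hS3 : 0 + a < l by lia.

have [t0 S0] := succ H0 hS3.
have hS4 : 0 + a < l by lia.

have [t1 S1] := succ H hS4.
by apply: (NC' S0 S1).
Qed.

Lemma start_ge L c t : ST T L c t -> 0 < c -> a + L <= c.
Proof.
move=> H hc; case: (ltnP c (a + L)) => // h; exfalso.
have hh1 : 0 <= c < 0 + (a + L) by lia.
have hh2 : c <= c < c + t by have := t_pos H; lia.
have [E _] := uniqc (initL L) H hh1 hh2; lia.
Qed.

Lemma start_line L L' c t t' : ST T L c t -> ST T L' c t' -> 0 < c -> L = L'.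
Proof.
move=> H H' hc; case: (eqVneq L L') => // ne; exfalso.
have e : L' = ~~ L by move: ne; case: (L); case: (L').
by rewrite e in H'; apply: (NC' H H').
Qed.

Lemma ENDl L x t : ST T L (a + x) t -> n <= x -> a + x + t = l.
Proof.
move=> H hx; have hb := bnd H.
case: (ltnP (a + x + t) l) => h; last lia.
exfalso.
have [t' H'] := succ H h.
have hb' := bnd H'; have := ST_t H; have := ST_t H' => ht' ht.
have ea : a = 1 by lia.
have ex : x = n by lia.
have et : t = 1 by lia.
have et' : t' = 1 by lia.
subst x t t'.
have hS5 : a + n + 1 < l by lia.

have [c'' [t'' [H'' h1 h2]]] := (let: And3 _ He _ := HT in He) (~~ L) (a + n + 1) hS5.
have := ST_t H''; move=> ht''.
case: (ltnP c'' (a + n + 1)) => hc.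
- have ec : c'' = a + n by lia.
  subst c''; exact: (NC' H H'' (ltn_addr n (ltn0Sn m))).
- have ec : c'' = a + n + 1 by lia.
  subst c''; exact: (NC' H' H'' (ltn0Sn _)).
Qed.

Lemma wT_spec i :
  (exists L t, [/\ ST T L (a + i) t, wT T i = i + t &
                  forall L' t', ST T L' (a + i) t' -> L' = L /\ t' = t]) \/
  ((forall L t, ~ ST T L (a + i) t) /\ wT T i = i).
Proof.
rewrite /wT; case: pickP => [p /andP [pT /eqP hc] | hn].
- left; exists (odd p.1 (+) f), (a + p.2).
  have H := memT pT; rewrite hc in H.
  split => // L' t' H'.
  have e := start_line H' H (ltn_addr i (ltn0Sn m)).
  by subst L'; split => //; apply: uniq0 H' H.
- right; split => // L t [p pT [e1 e2]].
  by move: (hn p); rewrite pT e1 half2 eqxx.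
Qed.

Lemma startA : ST T false a 0 \/ True.
Proof. by right. Qed.

Lemma wT_props i : i < n ->
  [/\ 2 <= wT T i, wT T i <= n.+1 & (wT T i == i) || (wT T i == i + a) || (wT T i == i + a.+1)].
Proof.
move=> hi.
have hS6 : 0 + a < l by lia.

have [tA SA] := succ H0 hS6.
have hS7 : 0 + (a + true) < l by lia.

have [tB SB] := succ (initL true) hS7.
case: (wT_spec i) => [[L [t [H -> U]]] | [hn ->]].
- have ht := ST_t H.
  have hS8 : a + i + t < l by lia.

  have [t' H'] := succ H hS8.
  have := bnd H'; have := ST_t H' => ht' hb'.
  split; last first.
  + by case: ht => ->; rewrite eqxx ?orbT.
  + lia.
  + case: (ltnP 1 (i + t)) => // h; exfalso.
    have ei : i = 0 by lia.
    have et : t = 1 by lia.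
    subst i t.
    rewrite addn0 in H H'; rewrite add0n in SA SB.
    have eL := start_line H SA (ltn0Sn m).
    subst L.
    have SB' : ST T true (a + 1) tB by [].
    exact: (NC' H' SB' (ltn0Sn _)).
- split; [|lia|by rewrite eqxx].
  case: (ltnP 1 i) => // h; exfalso.
  case: i hi hn h => [|[|i]] //= hi hn _.
  + by apply: (hn _ _ (_ : ST T false (a + 0) tA)); rewrite addn0.
  + by apply: (hn _ _ (_ : ST T true (a + 1) tB)); rewrite add0n addn1 in SB *.
Qed.

Lemma wT_inj i j : i < n -> j < n -> wT T i = wT T j -> i = j.
Proof.
move=> hi hj.
case: (wT_spec i) => [[L [t [H -> U]]] | [hn ->]];
case: (wT_spec j) => [[L' [t' [H' -> U']]] | [hn' ->]] => e.
- have ht := ST_t H.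
  have hS9 : a + i + t < l by lia.

  have [t1 S1] := succ H hS9.
  have hS10 : a + j + t' < l by have := ST_t H'; lia.

  have [t2 S2] := succ H' hS10.
  have e2 : a + j + t' = a + i + t by lia.
  rewrite e2 in S2.
  have hpos : 0 < a + i + t by lia.
  have eL := start_line S1 S2 hpos; subst L'.
  have hh1 : a + i <= a + i + t - 1 < a + i + t by lia.
  have hh2 : a + j <= a + i + t - 1 < a + j + t' by have := ST_t H'; lia.
  by have [] := uniqc H H' hh1 hh2; lia.
- have hS : a + i + t < l by have := ST_t H; lia.
  have [t1 S1] := succ H hS.
  by exfalso; apply: (hn' L t1); rewrite -e addnA.
- have hS : a + j + t' < l by have := ST_t H'; lia.
  have [t1 S1] := succ H' hS.
  by exfalso; apply: (hn L' t1); rewrite e addnA.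
- done.
Qed.

Lemma hT_spec (i : 'I_n) : (hT T i : nat).+2 = wT T i.
Proof.
pose fT (k : 'I_n) : 'I_n := odflt k (insub (wT T k - 2)).
have fTE k : (fT k : nat) = (wT T k - 2).
  have [h1 h2 _] := wT_props (ltn_ord k).
  by rewrite /fT insubT //= ; lia.
have fT_inj : injective fT.
  move=> k1 k2 e; apply: val_inj.
  have E : wT T k1 = wT T k2.
    have := fTE k1; have := fTE k2; rewrite e.
    have [h1 _ _] := wT_props (ltn_ord k1); have [h2 _ _] := wT_props (ltn_ord k2); lia.
  exact: wT_inj (ltn_ord k1) (ltn_ord k2) E.
rewrite /hT; case: pickP => [s0 /forallP Hs0 | hn] /=.
- have := Hs0 i => /eqP; have [h1 _ _] := wT_props (ltn_ord i); lia.
- exfalso; move: (hn (perm fT_inj)) => /negP; apply; apply/forallP => k.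
  by rewrite permE fTE.
Qed.

Lemma hT_valid : valid m (hT T).
Proof.
apply/forallP => i; rewrite hT_spec.
by have [_ _ ->] := wT_props (ltn_ord i).
Qed.

Local Notation s := (hT T).

Lemma sv_hT i : i < n -> (sv s i).+2 = wT T i.
Proof. by move=> hi; rewrite (svP _ hi) hT_spec. Qed.

Lemma Z_start i L t : i < n -> ST T L (a + i) t ->
  [/\ Z s i, len m s i = t & nxt m s i = i + t].
Proof.
move=> hi H; case: (wT_spec i) => [[L0 [t0 [H0' e U]]] | [hn _]]; last first.
  by exfalso; apply: (hn L t).
have [_ et] := U _ _ H; subst t0.
have zi : Z s i by rewrite /Z hi sv_hT // e /=; have := t_pos H; lia.
split => //.
- by rewrite /len hi sv_hT // e; lia.
- by rewrite /nxt zi sv_hT.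
Qed.

Lemma chT x L t : ST T L (a + x) t -> ch m s L x.
Proof.
elim/ltn_ind: x L t => x IH L t H.
have hS11 : 0 < a + x by lia.

have [c' [t' [H' e]]] := pred H hS11.
case: (posnP c') => hc.
- subst c'; have et := uniq0 H' (initL L).
  have ex : x = L by lia.
  by rewrite ex; apply: (ch_refl hT_valid).
- have hge := start_ge H' hc.
  have ec : c' = a + (c' - a) by lia.
  rewrite ec in H' e.
  have ht' := t_pos H'.
  have hx : c' - a < x by lia.
  have IH' := IH _ hx _ _ H'.
  case: (ltnP (c' - a) n) => hn.
  + have [_ _ en] := Z_start hn H'.
    have -> : x = nxt m s (c' - a) by lia.
    exact: (ch_nxt hT_valid).
  + exfalso; have := ENDl H' hn; have := bnd H; have := t_pos H; lia.
Qed.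

Lemma ST_CT L c t : ST T L c t -> CT m s L c t.
Proof.
move=> H; case: (posnP c) => hc.
- subst c; have -> := uniq0 H (initL L).
  by rewrite /CT !eqxx.
- have hge := start_ge H hc.
  have ec : c = a + (c - a) by lia.
  rewrite ec in H.
  have hb := bnd H; have ht := ST_t H.
  apply/orP; right; apply/and4P; split; first lia.
  + case: (ltnP (c - a) n) => hn.
    * by have [zi _ _] := Z_start hn H; rewrite /Z' zi.
    * rewrite /Z'; apply/orP; right; apply/orP; lia.
  + by rewrite (chL hT_valid) ?(chT H) //; case: (ltnP (c - a) n) => hn;
      [have [zi _ _] := Z_start hn H; rewrite /Z' zi | rewrite /Z'; apply/orP; right; apply/orP; lia].
  + case: (ltnP (c - a) n) => hn.
    * by have [_ -> _] := Z_start hn H.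
    * have := ENDl H hn; rewrite /len ltnNge hn /=.
      case: (eqVneq (c - a) n) => [-> | ne]; first lia.
      lia.
Qed.

Lemma g_h : gT m f (hT T) = T.
Proof.
symmetry; apply: TP_eq => //; first exact: (gT_TP f hT_valid).
apply/subsetP => p pT; rewrite inE; apply: ST_CT; exact: memT pT.
Qed.

End HT.

Lemma h_g (s : 'S_n) : valid m s -> hT (gT m f s) = s.
Proof.
move=> Hs; have [HT HN H0] := Meta_hyps (gT_meta f Hs).
apply/permP => i; apply: val_inj.
suff E : wT (gT m f s) i = (s i).+2.
  by have := hT_spec HT HN H0 i; rewrite E; case.

have hi := ltn_ord i.
case: (wT_spec HT HN H0 i) => [[L [t [H -> U]]] | [hn ->]].
- move/(ST_gT f Hs): H => /(CT_props Hs) [_ _ C].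
  have hS12 : 0 < a + i by lia.

  have [_ z ch et] := C hS12.
  rewrite (_ : a + i - a = i) in z ch et; last lia.
  have zi : Z s i by case: (Z'_cases z) => // [[]] e; lia.
  have [en _] := Z_len Hs zi.
  by rewrite et -en /nxt zi svE.
- case zi: (Z s i).
  + exfalso; apply: (hn (ch m s 1 i) (len m s i)); apply/(ST_gT f Hs).
    apply/orP; right; rewrite leq_addr (_ : a + i - a = i); last lia.
    by rewrite /Z' zi !eqxx.
  + by rewrite -svE notZ // zi.
Qed.

Lemma card_Meta : #|Meta m n f| = #|[set s : 'S_n | valid m s]|.
Proof.
apply/eqP; rewrite eqn_leq; apply/andP; split.
- rewrite -(card_in_imset (f := hT) (D := Meta m n f)).
    apply: subset_leq_card; apply/subsetP => s /imsetP [T TM ->].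
    have [HT HN H0] := Meta_hyps TM; by rewrite inE hT_valid.
  move=> T1 T2 M1 M2 e.
  have [HT1 HN1 H01] := Meta_hyps M1; have [HT2 HN2 H02] := Meta_hyps M2.
  by rewrite -(g_h HT1 HN1 H01) -(g_h HT2 HN2 H02) e.
- rewrite -(card_in_imset (f := gT m f) (D := [set s : 'S_n | valid m s])).
    apply: subset_leq_card; apply/subsetP => T /imsetP [s Vs ->].
    by rewrite inE in Vs; apply: gT_meta.
  move=> s1 s2; rewrite !inE => V1 V2 e.
  by rewrite -(h_g V1) -(h_g V2) e.
Qed.

End H.

Set Implicit Arguments.
Unset Strict Implicit.

Lemma Pcount_valid m n :
  Pcount n [:: (- 2)%R; (Posz m - 1)%R; Posz m] = #|[set s : 'S_n | valid m s]|.
Proof.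
rewrite /Pcount; apply: eq_card => s; rewrite !inE; apply: eq_forallb => i.
rewrite !inE orbA; congr (_ || _ || _); apply/eqP/eqP; lia.
Qed.

Section Split.
Variables (m n : nat).
Local Notation a := m.+1.
Local Notation l := (n + (2 * m + 3)).
Local Notation Tset := {set 'I_(2 * l) * bool}.
Local Notation ST := (ST m n false).

Lemma cell0 (T : Tset) : TP m n false T -> NC false T ->
  exists t0 t1, [/\ ST T false 0 t0, ST T true 0 t1 & t0 <> t1].
Proof.
case=> Hb He Hu HN.
have hl0 : 0 < l by lia.
have [c0 [t0 [H0 h01 h02]]] := He false 0 hl0.
have [c1 [t1 [H1 h11 h12]]] := He true 0 hl0.
have e0 : c0 = 0 by lia.
have e1 : c1 = 0 by lia.
subst c0 c1; exists t0, t1; split => // et; subst t1.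
have ht := ST_t H0.
apply: (HN t0); first by lia.
move=> L.
have htl : t0 < l by lia.
have [c [t [H h1 h2]]] := He L t0 htl.
exists t; case: (ltnP c t0) => hc; last by rewrite (_ : t0 = c) //; lia.
exfalso.
have HL : ST T L 0 t0 by case: (L).
have hh1 : 0 <= c < 0 + t0 by lia.
have hh2 : c <= c < c + t by lia.
have [E1 E2] := Hu _ _ _ _ _ _ HL H hh1 hh2.
subst c; have ht2 := ST_t H; lia.
Qed.


Lemma mu_split : mu m.+1 m.+2 l = #|Meta m n false| + #|Meta m n true|.
Proof.
have HS : [set T : Tset | is_metatile m.+1 m.+2 l T && is_mixed l T] =
          Meta m n false :|: Meta m n true.
  apply/setP => T; rewrite !inE; apply/idP/idP.
  - case/andP => HM Hmix; have [HT HN] := meta_TP_NC false HM.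
    have [t0 [t1 [S0 S1 ne]]] := cell0 HT HN.
    case: (ST_t S0) => e0.
    + apply/orP; left; rewrite HM Hmix /=; apply/existsP.
      case: S0 => p pT [e1 e2]; exists p; rewrite pT /= e1 /=.
      by move: e2; rewrite e0; case: (p.2) => //=; lia.
    + have e1' : t1 = a by case: (ST_t S1) => //; lia.
      apply/orP; right; rewrite HM Hmix /=; apply/existsP.
      case: S1 => p pT [e1 e2]; exists p; rewrite pT /= e1 /=.
      by move: e2; rewrite e1'; case: (p.2) => //=; lia.
  - by case/orP => /and3P [-> -> _].
have HI : Meta m n false :&: Meta m n true = set0.
  apply/setP => T; rewrite in_setI in_set0; apply/negP => /andP [M0 M1].
  have [HT HN H0] := Meta_hyps M0.
  move: M1; rewrite inE => /and3P [_ _ /existsP [p /andP [pT /andP [/eqP e1 e2]]]].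
  have H1 : ST T true 0 a.
    exists p => //; split; first by rewrite e1.
    by move: e2; case: (p.2) => //= _; rewrite addn0.
  have [t0 [t1 [S0 S1 ne]]] := cell0 HT HN.
  case: HT => Hb He Hu.
  have ht0 := ST_t S0; have ht1 := ST_t S1.
  have hh0 : 0 <= 0 < 0 + t0 by lia.
  have hh1 : 0 <= 0 < 0 + t1 by lia.
  have hha : 0 <= 0 < 0 + a by lia.
  have [_ E0] := Hu _ _ _ _ _ _ S0 H0 hh0 hha.
  have [_ E1] := Hu _ _ _ _ _ _ S1 H1 hh1 hha.
  by apply: ne; rewrite E0 E1.
by rewrite /mu HS cardsU HI cards0 subn0.
Qed.
End Split.

Unset Implicit Arguments.

Theorem theorem4 (m l : nat) :
  2 * m + 3 <= l ->
  mu m.+1 m.+2 l = 2 * Pcount (l - (2 * m + 3)) [:: (- 2)%R; (Posz m - 1)%R; Posz m].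
Proof.
move=> hl.
have [n ->] : exists n, l = n + (2 * m + 3) by exists (l - (2 * m + 3)); rewrite subnK.
by rewrite addnK mu_split !card_Meta Pcount_valid addnn mul2n.
Qed.
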